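(* For every infinite cardinal $\lambda$ there is an $E$-combination $T=\mathrm{Th}(\mathcal{A}_E)$ of IILU-theories in a language $\Sigma$ with $|\Sigma|=\lambda$ such that $T$ has no $e$-least models and $e\text{-}\mathrm{Sp}(T)\ge\max\{2^{\omega},\lambda\}$.
   Context: A predicate symbol $R$ is non-empty for a complete theory $T$ if $T\vdash\exists\bar x R(\bar x)$, empty otherwise. A complete theory $T$ in a predicate language is language uniform (LU) if for each arity $m$, every permutation of the set of $m$-ary symbols non-empty for $T$ preserves $T$; it is an IILU-theory if it has non-empty predicates and whenever there is a non-empty $m$-ary predicate there are infinitely many non-empty and infinitely many empty $m$-ary predicates. Let $E$ be a binary symbol not in $\Sigma$. The $E$-combination $\mathcal{A}_E$ of a family $(\mathcal{A}_i)_{i\in I}$ of $\Sigma$-structures with disjoint universes is the $(\Sigma\cup\{E\})$-structure on $\bigcup_iA_i$ with $E$ the equivalence relation whose classes are the $A_i$ and each $R\in\Sigma$ interpreted as $\bigcup_iR^{\mathcal{A}_i}$; ''an $E$-combination of IILU-theories'' means $\mathrm{Th}(\mathcal{A}_E)$ where each $\mathrm{Th}(\mathcal{A}_i)$ is an IILU-theory. For a model $\mathcal{M}$ of $T=\mathrm{Th}(\mathcal{A}_E)$, $\mathrm{TH}(\mathcal{M})$ is the set of complete $\Sigma$-theories of the $E$-classes of $\mathcal{M}$ (as induced $\Sigma$-structures). A model $\mathcal{M}$ of $T$ is $e$-least if $\mathrm{TH}(\mathcal{M})\subseteq\mathrm{TH}(\mathcal{N})$ for all $\mathcal{N}\models T$.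 Let $\mathcal{T}_T$ be the set of all theories of $E$-classes of all models of $T$. The $e$-spectrum of a model is $e\text{-}\mathrm{Sp}(\mathcal{M})=|\mathcal{T}_T\setminus\mathrm{TH}(\mathcal{M})|$, and $e\text{-}\mathrm{Sp}(T)=\sup\{e\text{-}\mathrm{Sp}(\mathcal{M})\mid\mathcal{M}\models T\}$. *)

(* Defs.v *)
From Stdlib Require Lists.List.
From mathcomp Require Import all_boot.
Set Implicit Arguments.
Unset Strict Implicit.
Unset Printing Implicit Defensive.

Inductive formula (S : Type) (ar : S -> nat) : Type :=
  | FRel (R : S) (v : 'I_(ar R) -> nat)
  | FEq (x y : nat)
  | FNot (phi : formula ar)
  | FAnd (phi psi : formula ar)
  | FEx (x : nat) (phi : formula ar).

Arguments FEq {S ar}.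
Arguments FRel {S ar} R v.
Arguments FNot {S ar} phi.
Arguments FAnd {S ar} phi psi.
Arguments FEx {S ar} x phi.

Record structure (S : Type) (ar : S -> nat) := Structure {
  carrier :> Type;
  interp : forall R : S, ('I_(ar R) -> carrier) -> Prop }.
Arguments interp {S ar} s R _.

Definition upd (M : Type) (a : nat -> M) (x : nat) (m : M) : nat -> M :=
  fun y => if y == x then m else a y.

Fixpoint sat S (ar : S -> nat) (M : structure ar) (a : nat -> M)
    (phi : formula ar) : Prop :=
  match phi with
  | FRel R v => interp M R (fun i => a (v i))
  | FEq x y => a x = a y
  | FNot p => ~ @sat S ar M a p
  | FAnd p q => @sat S ar M a p /\ @sat S ar M a q
  | FEx x p => exists m : M, @sat S ar M (upd a x m) p
  end.
Arguments sat {S ar} M a phi.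

Fixpoint fv S (ar : S -> nat) (phi : formula ar) (y : nat) : Prop :=
  match phi with
  | FRel R v => exists i, v i = y
  | FEq x z => y = x \/ y = z
  | FNot p => @fv S ar p y
  | FAnd p q => @fv S ar p y \/ @fv S ar q y
  | FEx x p => y <> x /\ @fv S ar p y
  end.

Definition sentence S (ar : S -> nat) (phi : formula ar) : Prop :=
  forall y, ~ fv phi y.

Definition theory S (ar : S -> nat) := formula ar -> Prop.

Definition Th S (ar : S -> nat) (M : structure ar) : theory ar :=
  fun phi => sentence phi /\ forall a : nat -> M, sat M a phi.

Fixpoint exs S (ar : S -> nat) (n : nat) (phi : formula ar) : formula ar :=
  match n with
  | 0 => phi
  | n'.+1 => FEx n' (@exs S ar n' phi)
  end.

Definition nonempty_for S (ar : S -> nat) (T : theory ar) (R : S) : Prop :=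
  T (exs (ar R) (FRel R (fun i => nat_of_ord i))).

Fixpoint rename S (ar : S -> nat) (s : S -> S) (H : forall R, ar (s R) = ar R)
    (phi : formula ar) : formula ar :=
  match phi with
  | FRel R v => FRel (s R) (fun i => v (cast_ord (H R) i))
  | FEq x y => FEq x y
  | FNot p => FNot (@rename S ar s H p)
  | FAnd p q => FAnd (@rename S ar s H p) (@rename S ar s H q)
  | FEx x p => FEx x (@rename S ar s H p)
  end.

(* Language uniform: for each arity m, every permutation of the set of m-ary
   symbols non-empty for T (extended by the identity elsewhere) preserves T. *)
Definition LU S (ar : S -> nat) (T : theory ar) : Prop :=
  forall (m : nat) (s : S -> S) (H : forall R, ar (s R) = ar R),
    bijective s ->
    (forall R, ~ (ar R = m /\ nonempty_for T R) -> s R = R) ->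
    forall phi, T phi <-> T (rename H phi).

Definition infinite_pred (X : Type) (P : X -> Prop) : Prop :=
  ~ exists l : seq X, forall x, P x -> Stdlib.Lists.List.In x l.

Definition infinite_type (X : Type) : Prop := infinite_pred (fun _ : X => True).

Definition IILU S (ar : S -> nat) (T : theory ar) : Prop :=
  [/\ LU T,
      exists R, nonempty_for T R &
      forall m : nat, (exists R, ar R = m /\ nonempty_for T R) ->
        infinite_pred (fun R => ar R = m /\ nonempty_for T R) /\
        infinite_pred (fun R => ar R = m /\ ~ nonempty_for T R)].

(* the language Sigma u {E}: None is the new binary symbol E *)
Definition arE S (ar : S -> nat) (o : option S) : nat :=
  match o with Some R => ar R | None => 2 end.

(* E-combination of a family (A_i) (universes made disjoint via sigT) *)
Definition comb S (ar : S -> nat) (I : Type) (A : I -> structure ar)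
  : structure (arE ar) :=
  @Structure _ (arE ar) {i : I & A i}
    (fun o => match o return ('I_(arE ar o) -> {i : I & A i}) -> Prop with
      | None => fun t => projT1 (t ord0) = projT1 (t ord_max)
      | Some R => fun t => exists i (u : 'I_(ar R) -> A i),
                     (forall k, t k = existT _ i (u k)) /\ interp (A i) R u
      end).

Definition pair2 (M : Type) (a b : M) : 'I_2 -> M :=
  fun k => if nat_of_ord k == 0 then a else b.

Definition eclass S (ar : S -> nat) (N : structure (arE ar)) (a : N)
  : structure ar :=
  @Structure _ ar {b : N | interp N None (pair2 a b)}
    (fun R t => interp N (Some R) (fun k => sval (t k))).

Definition model S (ar : S -> nat) (T : theory ar) (N : structure ar) : Prop :=
  inhabited N /\ forall phi, T phi -> forall a : nat -> N, sat N a phi.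

Definition TH S (ar : S -> nat) (N : structure (arE ar)) : theory ar -> Prop :=
  fun Th0 => exists a : N, Th0 = Th (eclass a).

Definition TT S (ar : S -> nat) (T : theory (arE ar)) : theory ar -> Prop :=
  fun Th0 => exists N, model T N /\ TH N Th0.

Definition e_least S (ar : S -> nat) (T : theory (arE ar))
    (M : structure (arE ar)) : Prop :=
  model T M /\ forall N, model T N -> forall Th0, TH M Th0 -> TH N Th0.

(* T_T \ TH(M), whose cardinality is e-Sp(M) *)
Definition spdiff S (ar : S -> nat) (T : theory (arE ar))
    (M : structure (arE ar)) : Type :=
  {Th0 : theory ar | TT T Th0 /\ ~ TH M Th0}.

Definition card_le (A B : Type) : Prop := exists f : A -> B, injective f.
Definition card_lt (A B : Type) : Prop := card_le A B /\ ~ card_le B A.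

(* e-Sp(T) = sup_M e-Sp(M) >= |K|, i.e. every cardinal < |K| is exceeded
   by e-Sp(M) for some model M of T. *)
Definition eSp_ge S (ar : S -> nat) (T : theory (arE ar)) (K : Type) : Prop :=
  forall U : Type, card_lt U K ->
    exists M, model T M /\ card_lt U (spdiff T M).

(* Main.v *)
Require Import Defs.
From mathcomp Require Import all_boot zify.
From Stdlib Require Import Classical ClassicalEpsilon FunctionalExtensionality.
From Stdlib Require Lists.List.
Definition ar1 (K : Type) : K -> nat := fun _ => 1.
Set Implicit Arguments.
Unset Strict Implicit.

Definition good (K : Type) (N : structure (arE (ar1 K))) (lab : N -> K -> Prop) : Prop :=
  [/\ (forall t : 'I_2 -> N, interp N None t <-> t ord0 = t ord_max),
      (forall R (t : 'I_1 -> N), interp N (Some R) t <-> lab (t ord0) R) &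
      (forall (F : list K) (P : K -> Prop) (l : list N), exists n : N,
          ~ List.In n l /\ forall k, List.In k F -> (lab n k <-> P k))].

Fixpoint syms (K : Type) (phi : formula (arE (ar1 K))) : list K :=
  match phi with
  | FRel (Some R) _ => R :: nil
  | FRel None _ => nil
  | FEq _ _ => nil
  | FNot p => syms p
  | FAnd p q => List.app (syms p) (syms q)
  | FEx _ p => syms p
  end.

Definition Bsim K (N1 N2 : structure (arE (ar1 K))) (lab1 : N1 -> K -> Prop)
  (lab2 : N2 -> K -> Prop) (F : list K) (V : list nat) (a : nat -> N1) (b : nat -> N2) : Prop :=
  (forall x y, List.In x V -> List.In y V -> (a x = a y <-> b x = b y)) /\
  (forall x, List.In x V -> forall k, List.In k F -> (lab1 (a x) k <-> lab2 (b x) k)).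

Lemma In_cons_neq (w x : nat) V : List.In w (x :: V) -> w != x -> List.In w V.
Proof. by case=> [->|//]; rewrite eqxx. Qed.

Lemma Bsim_sym K N1 N2 lab1 lab2 F V a b :
  @Bsim K N1 N2 lab1 lab2 F V a b -> Bsim lab2 lab1 F V b a.
Proof.
case=> B1 B2; split=> [x y Hx Hy|x Hx k Hk]; apply: iff_sym; [exact: B1|exact: B2].
Qed.

Lemma Bsim_ext K (N1 N2 : structure (arE (ar1 K))) lab1 lab2 F V a b (x : nat) (m : N1) :
  good lab2 -> @Bsim K N1 N2 lab1 lab2 F V a b ->
  exists n, Bsim lab1 lab2 F (x :: V) (upd a x m) (upd b x n).
Proof.
move=> [_ _ G3] [B1 B2].
have [[y [Hy [Hyx Hay]]]|Hno] :=
  classic (exists y, List.In y V /\ y <> x /\ a y = m).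
- exists (b y); split.
  + move=> z w Hz Hw; rewrite /upd.
    case: (eqVneq z x) => [Ez|Hzx]; case: (eqVneq w x) => [Ew|Hwx].
    * tauto.
    * rewrite -Hay; exact: B1 (In_cons_neq Hw Hwx).
    * rewrite -Hay; exact: B1 (In_cons_neq Hz Hzx) Hy.
    * exact: B1 (In_cons_neq Hz Hzx) (In_cons_neq Hw Hwx).
  + move=> z Hz k Hk; rewrite /upd.
    case: (eqVneq z x) => [Ez|Hzx].
    * rewrite -Hay; exact: B2.
    * exact: B2 (In_cons_neq Hz Hzx) k Hk.
- have [n [Hn Hlab]] := G3 F (lab1 m) (List.map b V).
  exists n; split.
  + move=> z w Hz Hw; rewrite /upd.
    case: (eqVneq z x) => [Ez|Hzx]; case: (eqVneq w x) => [Ew|Hwx].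
    * tauto.
    * have Hw' := In_cons_neq Hw Hwx.
      split=> E; exfalso.
      - apply: Hno; exists w; split=> //; split=> //; exact/eqP.
      - apply: Hn; rewrite E; exact: List.in_map.
    * have Hz' := In_cons_neq Hz Hzx.
      split=> E; exfalso.
      - apply: Hno; exists z; split=> //; split=> //; exact/eqP.
      - apply: Hn; rewrite -E; exact: List.in_map.
    * exact: B1 (In_cons_neq Hz Hzx) (In_cons_neq Hw Hwx).
  + move=> z Hz k Hk; rewrite /upd.
    case: (eqVneq z x) => [Ez|Hzx].
    * exact: iff_sym (Hlab k Hk).
    * exact: B2 (In_cons_neq Hz Hzx) k Hk.
Qed.

Lemma Bsim_sat K N1 N2 lab1 lab2 (G1 : good lab1) (G2 : good lab2)
    (phi : formula (arE (ar1 K))) :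
  forall F V a b, (forall k, List.In k (syms phi) -> List.In k F) ->
  (forall y, fv phi y -> List.In y V) ->
  @Bsim K N1 N2 lab1 lab2 F V a b -> (sat N1 a phi <-> sat N2 b phi).
Proof.
elim: phi => [[R|] v|x y|p IH|p IHp q IHq|x p IH] F V a b HS HV HB /=.
- case: G1 => _ H1 _; case: G2 => _ H2 _.
  eapply iff_trans; first exact: H1.
  eapply iff_trans; last exact: iff_sym (H2 _ _).
  apply: (proj2 HB).
  + apply: HV; by exists ord0.
  + apply: HS; by left.
- case: G1 => H1 _ _; case: G2 => H2 _ _.
  eapply iff_trans; first exact: H1.
  eapply iff_trans; last exact: iff_sym (H2 _).
  apply: (proj1 HB); apply: HV; [by exists ord0|by exists ord_max].
- apply: (proj1 HB); apply: HV; [by left|by right].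
- have := IH F V a b HS HV HB; tauto.
- have H1 := IHp F V a b (fun k h => HS k (List.in_or_app _ _ _ (or_introl h)))
     (fun y h => HV y (or_introl h)) HB.
  have H2 := IHq F V a b (fun k h => HS k (List.in_or_app _ _ _ (or_intror h)))
     (fun y h => HV y (or_intror h)) HB.
  tauto.
- have HV' : forall y, fv p y -> List.In y (x :: V).
    move=> y Hy; have [->|Hyx] := classic (y = x); first by left.
    right; apply: HV; by split.
  split.
  + case=> m Hm.
    have [n Hn] := Bsim_ext x m G2 HB.
    exists n; exact: (proj1 (IH F (x :: V) _ _ HS HV' Hn)).
  + case=> n Hn.
    have [m Hm] := Bsim_ext x n G1 (Bsim_sym HB).
    exists m; exact: (proj2 (IH F (x :: V) _ _ HS HV' (Bsim_sym Hm))).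
Qed.

Lemma good_inh K N lab : @good K N lab -> inhabited N.
Proof. case=> _ _ G3; have [n _] := G3 nil (fun _ => True) nil; exact: inhabits n. Qed.

Lemma good_model K N1 N2 lab1 lab2 (G1 : @good K N1 lab1) (G2 : @good K N2 lab2) :
  model (Th N1) N2.
Proof.
split; first exact: good_inh G2.
move=> phi [Hsen Hall] b.
have [p] := good_inh G1.
apply: (proj1 (Bsim_sat G1 G2 (F := syms phi) (V := nil) (a := fun _ => p) (b := b)
          (fun k h => h) _ _)) => //.
Qed.

Definition sig1 K (k : K) : formula (ar1 K) := FEx 0 (@FRel K (ar1 K) k (fun _ => 0)).

Lemma labTh K N lab (G : @good K N lab) (p : N) k :
  Th (eclass p) (sig1 k) <-> lab p k.
Proof.
case: G => H1 H2 _.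
have Hpp : interp N None (pair2 p p) by apply/H1.
split.
- case=> _ Hall.
  have [[q Hq] Hm] := Hall (fun _ => exist _ p Hpp).
  move: Hm; rewrite /upd /= => /H2 /=.
  move/H1: Hq; rewrite /pair2 /= => <-.
  done.
- move=> Hl; split.
  + move=> y /= [Hy [i Hi]]; by apply: Hy.
  + move=> a; exists (exist _ p Hpp); rewrite /upd /=; by apply/H2.
Qed.

Lemma Th_lab K N1 N2 lab1 lab2 (G1 : @good K N1 lab1) (G2 : @good K N2 lab2)
   (p : N1) (q : N2) : Th (eclass p) = Th (eclass q) -> forall k, lab1 p k <-> lab2 q k.
Proof.
move=> E k; split=> H.
- apply/(labTh G2); rewrite -E; exact/(labTh G1).
- apply/(labTh G1); rewrite E; exact/(labTh G2).
Qed.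

Definition gstr K (J : Type) (lab : J -> K -> Prop) : structure (arE (ar1 K)) :=
  @Structure _ (arE (ar1 K)) J
   (fun o => match o return ('I_(arE (ar1 K) o) -> J) -> Prop with
     | None => fun t => t ord0 = t ord_max
     | Some R => fun t => lab (t ord0) R end).

Lemma bound Y (g : Y -> nat) (l : list Y) : exists n, forall y, List.In y l -> g y < n.
Proof.
elim: l => [|y l [n IH]]; first by exists 0.
exists (n + (g y).+1) => z /= [<-|/IH]; lia.
Qed.

Lemma good_pair K X (lab : X * nat -> K -> Prop)
  (H : forall F (P : K -> Prop), exists x, forall n k, List.In k F -> (lab (x, n) k <-> P k)) :
  @good K (gstr lab) lab.
Proof.
split=> //.
move=> F P l; have [x Hx] := H F P; have [n Hn] := bound snd l.
exists (x, n); split; last exact: Hx.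
by move/Hn; rewrite ltnn.
Qed.

Lemma filterP K (F : list K) (P : K -> Prop) :
  exists x : list K, forall k, List.In k x <-> List.In k F /\ P k.
Proof.
elim: F => [|k0 F [x IH]]; first by exists nil => k; simpl; tauto.
have [Hp|Hp] := classic (P k0).
- exists (k0 :: x) => k /=; have := IH k.
  have [<-|Hne] := classic (k0 = k); tauto.
- exists x => k /=; have := IH k.
  have [<-|Hne] := classic (k0 = k); tauto.
Qed.

Definition Mfin K := gstr (fun (x : list K * nat) k => List.In k x.1).
Definition Mcof K := gstr (fun (x : list K * nat) k => ~ List.In k x.1).
Definition Mall K := gstr (fun (x : (K -> Prop) * nat) k => x.1 k).

Lemma good_fin K : @good K (Mfin K) (fun (x : list K * nat) k => List.In k x.1).
Proof.
apply: good_pair => F P; have [x Hx] := filterP F P.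
exists x => n k Hk /=; have := Hx k; tauto.
Qed.

Lemma good_cof K : @good K (Mcof K) (fun (x : list K * nat) k => ~ List.In k x.1).
Proof.
apply: good_pair => F P; have [x Hx] := filterP F (fun k => ~ P k).
exists x => n k Hk /=; have := Hx k; have := NNPP (P k); tauto.
Qed.

Lemma good_all K : @good K (Mall K) (fun (x : (K -> Prop) * nat) k => x.1 k).
Proof. apply: good_pair => F P; by exists P. Qed.

Definition Iset K := ((list K * (K -> Prop)) * nat)%type.
Definition Yset K (Z : K -> Prop) (i : Iset K) (k : K) : Prop :=
  (List.In k i.1.1 /\ i.1.2 k) \/ (~ List.In k i.1.1 /\ Z k).
Definition Astr K (Z : K -> Prop) (i : Iset K) : structure (ar1 K) :=
  @Structure K (ar1 K) unit (fun R _ => Yset Z i R).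

Lemma good_comb K (Z : K -> Prop) :
  @good K (comb (Astr Z)) (fun s => Yset Z (projT1 s)).
Proof.
split.
- move=> t /=; case: (t ord0) => i []; case: (t ord_max) => j [] /=.
  split; first by move->.
  move=> E; exact: (f_equal (@projT1 _ _) E).
- move=> R t /=; split.
  + by case=> i [u [Ht HY]]; rewrite Ht.
  + move=> HY; exists (projT1 (t ord0)), (fun _ => tt); split => //.
    move=> k; rewrite (ord1 k); by case: (t ord0) => i [].
- move=> F P l; have [n Hn] := bound (fun s : {i : Iset K & Astr Z i} => (projT1 s).2) l.
  exists (@existT (Iset K) (fun i => Astr Z i) ((F, P), n) tt); split.
  + by move/Hn; rewrite /= ltnn.
  + move=> k Hk; rewrite /Yset /=; tauto.
Qed.

Lemma inf_mono X (P Q : X -> Prop) : infinite_pred P -> (forall x, P x -> Q x) -> infinite_pred Q.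
Proof. move=> HP HPQ [l Hl]; apply: HP; exists l => x /HPQ /Hl; done. Qed.

Lemma exists_inj K : infinite_type K -> exists e : nat -> K, injective e.
Proof.
move=> HK.
have Hg : forall l : list K, exists k, ~ List.In k l.
  move=> l; apply: NNPP => Hn; apply: HK; exists l => x _.
  by apply: NNPP => Hx; apply: Hn; exists x.
pose g l := proj1_sig (constructive_indefinite_description _ (Hg l)).
have gP : forall l, ~ List.In (g l) l :=
  fun l => proj2_sig (constructive_indefinite_description _ (Hg l)).
pose sq := fix sq n := match n with 0 => nil | n'.+1 => g (sq n') :: sq n' end.
have Hin : forall m n, m < n -> List.In (g (sq m)) (sq n).
  move=> m; elim => [//|n IH]; rewrite ltnS leq_eqVlt => /orP [/eqP->|/IH H] /=;
  [left|right] => //.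
exists (fun n => g (sq n)) => m n E.
case: (ltngtP m n) => // [/Hin|/Hin] H.
- by rewrite E in H; case: (gP _ H).
- by rewrite -E in H; case: (gP _ H).
Qed.

Lemma inj_inf K (h : nat -> K) : injective h -> infinite_pred (fun k => exists n, k = h n).
Proof.
move=> Hh [l Hl].
have Hnd : List.NoDup (List.map h (List.seq 0 (List.length l).+1)).
  apply: List.NoDup_map_NoDup_ForallPairs; last exact: List.seq_NoDup.
  move=> x y _ _; exact: Hh.
have Hincl : List.incl (List.map h (List.seq 0 (List.length l).+1)) l.
  move=> x /List.in_map_iff [n [<- _]]; apply: Hl; by exists n.
have := List.NoDup_incl_length Hnd Hincl.
rewrite List.length_map List.length_seq; lia.
Qed.

Lemma nonempty_A K Z (i : Iset K) R :
  nonempty_for (Th (Astr Z i)) R <-> Yset Z i R.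
Proof.
split.
- case=> _ Hall; have [m Hm] := Hall (fun _ => tt); exact: Hm.
- move=> HY; split.
  + move=> y /= [Hy [j Hj]]; apply: Hy; rewrite -Hj (ord1 j); done.
  + move=> a; by exists tt.
Qed.

Lemma rename_sat K Z (i : Iset K) (s : K -> K) (H : forall R, ar1 K (s R) = ar1 K R)
  (Hs : forall R, Yset Z i (s R) <-> Yset Z i R) phi :
  forall a, sat (Astr Z i) a (rename H phi) <-> sat (Astr Z i) a phi.
Proof.
elim: phi => [R v|x y|p IH|p IHp q IHq|x p IH] a /=.
- exact: Hs.
- done.
- have := IH a; tauto.
- have := IHp a; have := IHq a; tauto.
- split; case=> m Hm; exists m; [exact/IH|exact/IH].
Qed.

Lemma rename_fv K (s : K -> K) (H : forall R, ar1 K (s R) = ar1 K R) phi y :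
  fv (rename H phi) y <-> fv phi y.
Proof.
elim: phi => [R v|x z|p IH|p IHp q IHq|x p IH] /=.
- split; case=> j Hj.
  + by exists (cast_ord (H R) j).
  + exists (cast_ord (esym (H R)) j); by rewrite cast_ordKV.
- done.
- done.
- tauto.
- tauto.
Qed.

Lemma IILU_A K Z (i : Iset K) :
  infinite_pred Z -> infinite_pred (fun k => ~ Z k) -> IILU (Th (Astr Z i)).
Proof.
move=> HZ HnZ.
have Yinf : infinite_pred (Yset Z i).
  move=> [l Hl]; apply: HZ; exists (List.app l i.1.1) => z Hz.
  apply: List.in_or_app; have [Hin|Hin] := classic (List.In z i.1.1); first by right.
  left; apply: Hl; by right.
have Ycoinf : infinite_pred (fun k => ~ Yset Z i k).
  move=> [l Hl]; apply: HnZ; exists (List.app l i.1.1) => z Hz.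
  apply: List.in_or_app; have [Hin|Hin] := classic (List.In z i.1.1); first by right.
  left; apply: Hl; rewrite /Yset; tauto.
split.
- move=> m s H Hbij Hfix phi.
  have Hinj := bij_inj Hbij.
  have Hs : forall R, Yset Z i (s R) <-> Yset Z i R.
    move=> R.
    have [HX|HX] := classic (ar1 K R = m /\ nonempty_for (Th (Astr Z i)) R); last first.
      by rewrite Hfix.
    have [HX'|HX'] := classic (ar1 K (s R) = m /\ nonempty_for (Th (Astr Z i)) (s R)).
      have := proj1 (nonempty_A _ _ _) (proj2 HX).
      have := proj1 (nonempty_A _ _ _) (proj2 HX'); tauto.
    have E := Hfix _ HX'; have E' := Hinj _ _ E.
    by rewrite E'.
  split; case=> Hsen Hall; split.
  + by move=> y /rename_fv /Hsen.
  + move=> a; exact/rename_sat.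
  + by move=> y Hy; apply: (Hsen y); apply/rename_fv.
  + move=> a; exact/(rename_sat H Hs).
- have [R HR] : exists R, Yset Z i R.
    apply: NNPP => Hn; apply: Yinf; exists nil => x Hx; apply: Hn; by exists x.
  exists R; exact/nonempty_A.
- move=> m [R [HRm _]]; split.
  + apply: (inf_mono Yinf) => x Hx; split; first by rewrite -HRm.
    exact/nonempty_A.
  + apply: (inf_mono Ycoinf) => x Hx; split; first by rewrite -HRm.
    by move/nonempty_A.
Qed.

Lemma card_lt_trans U X Y : card_lt U X -> card_le X Y -> card_lt U Y.
Proof.
move=> [[f Hf] Hn] [g Hg]; split; first by exists (g \o f); exact: inj_comp.
move=> [h Hh]; apply: Hn; exists (h \o g); exact: inj_comp.
Qed.




Lemma spec_inj K (Z : K -> Prop) (X : Type) (Q : X -> K -> Prop)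
  (Qinf : forall x, infinite_pred (Q x))
  (Qinj : forall x y, (forall k, Q x k <-> Q y k) -> x = y) :
  card_le X (spdiff (Th (comb (Astr Z))) (Mfin K)).
Proof.
have GA := good_comb Z.
have TT1 : forall x, TT (Th (comb (Astr Z))) (Th (@eclass _ _ (Mall K) (Q x, 0))).
  move=> x; exists (Mall K); split; first exact: good_model GA (good_all K).
  by exists (Q x, 0).
have NT : forall x, ~ TH (Mfin K) (Th (@eclass _ _ (Mall K) (Q x, 0))).
  move=> x [y Hy]; apply: (Qinf x); exists y.1 => k Hk.
  exact: (proj1 (Th_lab (good_all K) (good_fin K) Hy k)).
exists (fun x => (exist (fun Th0 => TT (Th (comb (Astr Z))) Th0 /\ ~ TH (Mfin K) Th0)
   (Th (@eclass _ _ (Mall K) (Q x, 0))) (conj (TT1 x) (NT x)) : spdiff _ _)) => x y E.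
have E' := f_equal (@proj1_sig _ _) E; simpl in E'.
apply: Qinj => k; exact: (Th_lab (good_all K) (good_all K) E' k).
Qed.

Theorem proposition5p3 (K : Type) (HK : infinite_type K) :
  exists (S : Type) (ar : S -> nat) (I : Type) (A : I -> structure ar),
    (exists f : S -> K, bijective f) /\
    inhabited I /\
    (forall i, inhabited (A i)) /\
    (forall i, IILU (Th (A i))) /\
    (~ exists M, e_least (Th (comb A)) M) /\
    eSp_ge (Th (comb A)) (nat -> bool) /\
    eSp_ge (Th (comb A)) K.
Proof.
have [e He] := exists_inj HK.
pose Z := fun k => exists n, k = e (2 * n).
have HZ : infinite_pred Z.
  apply: (inj_inf (h := fun n => e (2 * n))) => m n /He; lia.
have HnZ : infinite_pred (fun k => ~ Z k).
  apply: (inf_mono (inj_inf (h := fun n => e (2 * n).+1) _)).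
    move=> m n /He; lia.
  move=> k [n ->] [m /He]; lia.
have GA := good_comb Z.
exists K, (ar1 K), (Iset K), (Astr Z).
split; first by exists id; exists id.
split; first exact: inhabits ((nil, fun _ => False), 0).
split; first by move=> i; exact: inhabits tt.
split; first by move=> i; exact: IILU_A.
split.
- move=> [M [[[a] HM] Hl]].
  have [x Hx] := Hl _ (good_model GA (good_fin K)) _ (ex_intro _ a erefl).
  have [y Hy] := Hl _ (good_model GA (good_cof K)) _ (ex_intro _ a erefl).
  have E : Th (eclass x) = Th (eclass y) by rewrite -Hx -Hy.
  have := Th_lab (good_fin K) (good_cof K) E => Hxy.
  apply: HK; exists (List.app x.1 y.1) => k _; apply: List.in_or_app.
  have [H|H] := classic (List.In k x.1); first by left.
  right; apply: NNPP => H'; apply: H; exact/(Hxy k).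
split.
- move=> U HU; exists (Mfin K); split; first exact: good_model GA (good_fin K).
  apply: (card_lt_trans HU).
  apply: (@spec_inj _ _ _ (fun (f : nat -> bool) k =>
             exists n, k = e (2 * n) \/ (k = e (2 * n).+1 /\ f n = true))).
  + move=> f; apply: (inf_mono HZ) => k [n ->]; exists n; by left.
  + move=> f g Hfg; apply: functional_extensionality => n.
    have key : forall h : nat -> bool,
        (exists m, e (2 * n).+1 = e (2 * m) \/ (e (2 * n).+1 = e (2 * m).+1 /\ h m = true))
        <-> h n = true.
      move=> h; split.
      * case=> m [/He|[/He Em Hm]]; first lia.
        have -> : n = m by lia.
        done.
      * move=> Hh; exists n; by right.
    have := Hfg (e (2 * n).+1); rewrite key key.
    case: (f n); case: (g n); intuition.
- move=> U HU; exists (Mfin K); split; first exact: good_model GA (good_fin K).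
  apply: (card_lt_trans HU).
  apply: (@spec_inj _ _ _ (fun (k0 : K) k => k <> k0)).
  + move=> k0 [l Hl]; apply: HK; exists (k0 :: l) => k _ /=.
    have [->|Hne] := classic (k0 = k); first by left.
    right; apply: Hl => E; apply: Hne; by rewrite E.
  + move=> k0 k1 H; apply: NNPP => Hne.
    have := H k0; tauto.
Qed.
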